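(* Let $I$ be a resident-minimal instance in which every hospital has quota $1$ (the stable marriage case). Then each $(r,h)\in\mathrm{tent}(I)$ is finalizable in $I$ only if it belongs to the maximal safe set with respect to $I$ (the unique inclusion-maximal subset of $\mathrm{tent}(I)$ that is safe with respect to $I$).
   Context: An instance $I$ consists of finite disjoint sets $R$ (residents) and $H$ (hospitals), a positive integer quota $q_h$ for each $h\in H$, for each $r\in R$ a preference list of $r$ (a sequence of distinct members of $H$, not necessarily all), and for each $h\in H$ a preference list of $h$ (a sequence of distinct members of $R$). A list is complete if it contains every member of the opposite side; an instance is complete if all lists are complete. A match is a pair $(r,h)\in R\times H$. For a set $M$ of matches, $\mathrm{res}_h M=\{r:(r,h)\in M\}$, $\mathrm{res}\,M=\{r:(r,h)\in M\text{ for some }h\}$. $J$ is an extension of $I$ (same $R,H$, quotas) if every list of $J$ has the corresponding list of $I$ as a prefix; a complete extension is a completion. An event is $(r,h)^+$ (proposal) or $(r,h)^-$ (rejection). For an event sequence $\sigma$, $\mathrm{prop}(\sigma)$, $\mathrm{rej}(\sigma)$ are the sets of matches proposed/rejected in $\sigma$, $\mathrm{tent}(\sigma)=\mathrm{prop}(\sigma)\setminus\mathrm{rej}(\sigma)$, and $\mathrm{pend}_I(\sigma)$ is the set of $(r,h)\in\mathrm{tent}(\sigma)$ with $r$ not on the list of $h$ in $I$. A match $(r,h)\in M$ is ousted from $M$ in $I$ if the list of $h$ in $I$ contains at least $q_h$ residents of $\mathrm{res}_h M$ and either $r$ is not on it or $r$ is preceded on it by at least $q_h$ residents of $\mathrm{res}_h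 M$. $I$-feasible sequences: the empty sequence is $I$-feasible; if $\sigma$ is $I$-feasible then $\sigma+(r,h)^+$ is $I$-feasible if $r\notin\mathrm{res}\,\mathrm{tent}(\sigma)$, $(r,h)\notin\mathrm{prop}(\sigma)$, $h$ is on the list of $r$ in $I$ and $(r,h')\in\mathrm{rej}(\sigma)$ for every $h'$ preceding $h$ on it; and $\sigma+(r,h)^-$ is $I$-feasible if $(r,h)$ is ousted from $\mathrm{prop}(\sigma)$ in $I$ and $(r,h)\notin\mathrm{rej}(\sigma)$. All maximal $I$-feasible sequences contain the same events; $\mathrm{prop}(I),\mathrm{tent}(I),\mathrm{pend}(I)$ denote $\mathrm{prop}(\sigma),\mathrm{tent}(\sigma),\mathrm{pend}_I(\sigma)$ for any maximal $I$-feasible $\sigma$. A match $(r,h)\in\mathrm{tent}(I)$ is finalizable in $I$ if $(r,h)\in\mathrm{tent}(J)$ for every completion $J$ of $I$. $I$ is resident-minimal if $\mathrm{prop}(I)$ equals the set of matches $(r,h)$ with $h$ on the list of $r$ in $I$. Let $M\subseteq\mathrm{tent}(I)$. A resident $r'$ is relevant to $h$ with respect to $M$ if $(r',h)\in M$ or $r'\notin\mathrm{res}\,M$. A match $(r,h)\in M$ is endangered in $M$ with respect to $I$ if: when $(r,h)\in\mathrm{tent}(I)\setminus\mathrm{pend}(I)$, the list of $h$ in $I$ contains at least $q_h$ residents preceding $r$ that are relevant to $h$ with respect to $M$; when $(r,h)\in\mathrm{pend}(I)$, the number of residents relevant to $h$ with respect to $M$ is at least $q_h+1$. $M$ is safe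 with respect to $I$ if no match of $M$ is endangered in $M$ with respect to $I$. (There is a unique inclusion-maximal safe subset of $\mathrm{tent}(I)$.) *)

(* Defs.v *)
From mathcomp Require Import all_boot.
Set Implicit Arguments.
Unset Strict Implicit.
Unset Printing Implicit Defensive.

Section HR.
Variables (R H : finType).

Record instance := Instance {
  quota : H -> nat;
  rlist : R -> seq H;
  hlist : H -> seq R
}.

Definition valid_instance (I : instance) : Prop :=
  (forall h, 0 < quota I h) /\ (forall r, uniq (rlist I r)) /\ (forall h, uniq (hlist I h)).

Definition complete_instance (I : instance) : Prop :=
  (forall r h, h \in rlist I r) /\ (forall h r, r \in hlist I h).

Definition extension (I J : instance) : Prop :=
  (forall h, quota J h = quota I h) /\
  (forall r, prefix (rlist I r) (rlist J r)) /\
  (forall h, prefix (hlist I h) (hlist J h)).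

Definition completion (I J : instance) : Prop :=
  valid_instance J /\ extension I J /\ complete_instance J.

Definition match_t := (R * H)%type.

Definition res_h (M : {set match_t}) (h : H) : {set R} := [set r | (r, h) \in M].
Definition res (M : {set match_t}) : {set R} := [set r | [exists h, (r, h) \in M]].

(* events: (true, m) = proposal m^+, (false, m) = rejection m^- *)
Definition event := (bool * match_t)%type.

Definition prop_of (s : seq event) : {set match_t} := [set m | (true, m) \in s].
Definition rej_of (s : seq event) : {set match_t} := [set m | (false, m) \in s].
Definition tent_of (s : seq event) : {set match_t} := prop_of s :\: rej_of s.
Definition pend_of (I : instance) (s : seq event) : {set match_t} :=
  [set m in tent_of s | m.1 \notin hlist I m.2].

Definition count_in (M : {set match_t}) (h : H) (l : seq R) : nat :=
  count (fun r' => r' \in res_h M h) l.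

Definition ousted (I : instance) (M : {set match_t}) (r : R) (h : H) : bool :=
  [&& (r, h) \in M,
      quota I h <= count_in M h (hlist I h) &
      (r \notin hlist I h) ||
      (quota I h <= count_in M h (take (index r (hlist I h)) (hlist I h)))].

Inductive feasible (I : instance) : seq event -> Prop :=
| feas_nil : feasible I [::]
| feas_prop (s : seq event) (r : R) (h : H) :
    feasible I s ->
    r \notin res (tent_of s) ->
    (r, h) \notin prop_of s ->
    h \in rlist I r ->
    (forall h', h' \in take (index h (rlist I r)) (rlist I r) -> (r, h') \in rej_of s) ->
    feasible I (rcons s (true, (r, h)))
| feas_rej (s : seq event) (r : R) (h : H) :
    feasible I s ->
    ousted I (prop_of s) r h ->
    (r, h) \notin rej_of s ->
    feasible I (rcons s (false, (r, h))).

Definition maximal_feasible (I : instance) (s : seq event) : Prop :=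
  feasible I s /\ forall e, ~ feasible I (rcons s e).

(* prop(I), tent(I), pend(I): computed from a maximal I-feasible sequence
   (all maximal I-feasible sequences contain the same events). *)
Definition propI (I : instance) (m : match_t) : Prop :=
  exists s, maximal_feasible I s /\ m \in prop_of s.
Definition tentI (I : instance) (m : match_t) : Prop :=
  exists s, maximal_feasible I s /\ m \in tent_of s.
Definition pendI (I : instance) (m : match_t) : Prop :=
  exists s, maximal_feasible I s /\ m \in pend_of I s.

Definition finalizable (I : instance) (m : match_t) : Prop :=
  tentI I m /\ forall J, completion I J -> tentI J m.

Definition resident_minimal (I : instance) : Prop :=
  forall r h, propI I (r, h) <-> h \in rlist I r.

Definition relevant (M : {set match_t}) (h : H) (r' : R) : bool :=
  ((r', h) \in M) || (r' \notin res M).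

Definition endangered (I : instance) (M : {set match_t}) (r : R) (h : H) : Prop :=
  (r, h) \in M /\
  ((tentI I (r, h) /\ ~ pendI I (r, h) /\
     quota I h <= count (relevant M h) (take (index r (hlist I h)) (hlist I h)))
   \/
   (pendI I (r, h) /\ quota I h + 1 <= #|[set r' | relevant M h r']|)).

Definition subset_tent (I : instance) (M : {set match_t}) : Prop :=
  forall m, m \in M -> tentI I m.

Definition safe (I : instance) (M : {set match_t}) : Prop :=
  subset_tent I M /\ forall r h, ~ endangered I M r h.

Definition maximal_safe (I : instance) (M : {set match_t}) : Prop :=
  safe I M /\ forall M' : {set match_t}, M \subset M' -> safe I M' -> M' = M.

End HR.

(* Main.v *)
Require Import Defs.
From mathcomp Require Import all_boot zify.
From Stdlib Require Import Classical ClassicalDescription.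
Set Implicit Arguments.
Unset Strict Implicit.
Unset Printing Implicit Defensive.


Section Gen.
Variables (R H : finType).
Implicit Types (J : instance R H) (s : seq (event R H)).

Lemma in_prop s m : (m \in prop_of s) = ((true, m) \in s).
Proof. by rewrite inE. Qed.
Lemma in_rej s m : (m \in rej_of s) = ((false, m) \in s).
Proof. by rewrite inE. Qed.

Lemma prop_rcons s e m : (m \in prop_of (rcons s e)) = ((e == (true, m)) || (m \in prop_of s)).
Proof. by rewrite !in_prop mem_rcons in_cons eq_sym. Qed.
Lemma rej_rcons s e m : (m \in rej_of (rcons s e)) = ((e == (false, m)) || (m \in rej_of s)).
Proof. by rewrite !in_rej mem_rcons in_cons eq_sym. Qed.

Lemma feas_inv J s e : feasible J (rcons s e) ->
  feasible J s /\
  (if e.1 then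
     [/\ e.2.1 \notin res (tent_of s), e.2 \notin prop_of s, e.2.2 \in rlist J e.2.1 &
       (forall h', h' \in take (index e.2.2 (rlist J e.2.1)) (rlist J e.2.1) -> (e.2.1, h') \in rej_of s)]
   else ousted J (prop_of s) e.2.1 e.2.2 /\ e.2 \notin rej_of s).
Proof.
move eq: (rcons s e) => t F; case: F eq => [|s0 r h F a1 a2 a3 a4|s0 r h F a1 a2].
- by case: s.
- by case/rcons_inj => -> ->; split.
- by case/rcons_inj => -> ->; split.
Qed.

Lemma feas_uniq J s : feasible J s -> uniq s.
Proof.
elim=> //= s0 r h F IH.
- by move=> _ np _ _; rewrite rcons_uniq -in_prop np.
- by move=> _ nr; rewrite rcons_uniq -in_rej nr.
Qed.

Lemma feas_rej_prop J s m : feasible J s -> m \in rej_of s -> m \in prop_of s.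
Proof.
move=> F; elim: F m => //= s0 r h F IH.
- by move=> _ _ _ _ m; rewrite rej_rcons prop_rcons /= => /IH ->; rewrite orbT.
- move=> O _ m; rewrite rej_rcons prop_rcons /= => /orP[/eqP[<-]|/IH//].
  by case/and3P: O.
Qed.

Lemma feas_prop_list J s a b : feasible J s -> (a, b) \in prop_of s -> b \in rlist J a.
Proof.
move=> F; elim: F a b => [|s0 r h F IH|s0 r h F IH].
- by move=> a b; rewrite in_prop.
- move=> _ _ hin _ a b; rewrite prop_rcons => /orP[/eqP[<- <-]//|/IH//].
- by move=> _ _ a b; rewrite prop_rcons => /orP[//|/IH//].
Qed.

Lemma feas_prop_earlier J s a b : feasible J s -> (a, b) \in prop_of s ->
  forall b', b' \in take (index b (rlist J a)) (rlist J a) -> (a, b') \in rej_of s.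
Proof.
move=> F; elim: F a b => [|s0 r h F IH|s0 r h F IH].
- by move=> a b; rewrite in_prop.
- move=> _ _ _ E a b; rewrite prop_rcons => /orP[/eqP[<- <-] b' /E|/IH H0 b' /H0];
    by rewrite rej_rcons orbC => ->.
- move=> _ _ a b; rewrite prop_rcons => /orP[//|/IH H0 b' /H0].
  by rewrite rej_rcons orbC => ->.
Qed.

Lemma index_lt_mem (T : eqType) (l : seq T) x y : x \in l -> y \in l -> x != y ->
  (index x l < index y l) \/ (index y l < index x l).
Proof.
move=> xl yl nxy; case: (ltngtP (index x l) (index y l)); auto.
by move=> E; move: nxy; rewrite -(nth_index x xl) E nth_index // eqxx.
Qed.

Lemma feas_tent_unique J s a b1 b2 : feasible J s ->
  (a, b1) \in tent_of s -> (a, b2) \in tent_of s -> b1 = b2.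
Proof.
move=> F; rewrite !in_setD => /andP[nr1 p1] /andP[nr2 p2].
apply/eqP; apply/negPn/negP => ne.
have l1 := feas_prop_list F p1; have l2 := feas_prop_list F p2.
case: (index_lt_mem l1 l2 ne) => lt.
- by move: nr1; rewrite (feas_prop_earlier F p2 (b' := b1)) // in_take.
- by move: nr2; rewrite (feas_prop_earlier F p1 (b' := b2)) // in_take.
Qed.

End Gen.


Section Gen2.
Variables (R H : finType).
Implicit Types (J : instance R H) (s : seq (event R H)).

Lemma pre_index (T : eqType) (p l : seq T) b : prefix p l -> b \in p ->
  index b l = index b p /\ take (index b l) l = take (index b p) p.
Proof.
case/prefixP=> t -> bp; rewrite index_cat bp; split=> //.
by rewrite take_cat index_mem bp.
Qed.

Lemma count_in_mono (M M' : {set match_t R H}) h l :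
  M \subset M' -> count_in M h l <= count_in M' h l.
Proof.
move=> sub; apply: sub_count => z; rewrite !inE => /(subsetP sub) //.
Qed.

Lemma ousted_mono J (M M' : {set match_t R H}) a b :
  M \subset M' -> ousted J M a b -> ousted J M' a b.
Proof.
move=> sub /and3P[m q o]; apply/and3P; split.
- exact: (subsetP sub).
- exact: leq_trans q (count_in_mono _ _ sub).
- case/orP: o => [->//|o]; apply/orP; right; exact: leq_trans o (count_in_mono _ _ sub).
Qed.

Lemma maxi J s t : feasible J s -> maximal_feasible J t ->
  prop_of s \subset prop_of t /\ rej_of s \subset rej_of t.
Proof.
move=> F [Ft Mt]; elim: F => [|s0 r h F [IHp IHr] nres np hin E|s0 r h F [IHp IHr] O nr].
- by split; apply/subsetP=> m; rewrite inE.
- have ptr : (r, h) \in prop_of t.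
    apply/negPn/negP=> ntp; apply: (Mt (true, (r, h))); apply: feas_prop => //.
    + apply/negP; rewrite inE => /existsP[b' tb'].
      have pb' : (r, b') \in prop_of t by move: tb'; rewrite in_setD => /andP[].
      have lb' := feas_prop_list Ft pb'.
      have nb : b' != h by apply/eqP=> eb; move: ntp; rewrite -eb pb'.
      case: (index_lt_mem lb' hin nb) => lt.
      * have : (r, b') \in rej_of s0 by apply: E; rewrite in_take.
        by move/(subsetP IHr); move: tb'; rewrite in_setD => /andP[/negP].
      * have := feas_prop_earlier Ft pb' (b' := h); rewrite in_take // => /(_ lt).
        by move/(feas_rej_prop Ft); rewrite (negbTE ntp).
    + by move=> h' /E /(subsetP IHr).
  split; apply/subsetP=> m.
  + by rewrite prop_rcons => /orP[/eqP[<-]//|/(subsetP IHp)].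
  + by rewrite rej_rcons => /orP[//|/(subsetP IHr)].
- have rtr : (r, h) \in rej_of t.
    apply/negPn/negP=> ntr; apply: (Mt (false, (r, h))); apply: feas_rej => //.
    exact: ousted_mono IHp O.
  split; apply/subsetP=> m.
  + by rewrite prop_rcons => /orP[//|/(subsetP IHp)].
  + by rewrite rej_rcons => /orP[/eqP[<-]//|/(subsetP IHr)].
Qed.

Lemma maxi_eq J t1 t2 : maximal_feasible J t1 -> maximal_feasible J t2 ->
  prop_of t1 = prop_of t2 /\ rej_of t1 = rej_of t2.
Proof.
move=> M1 M2; have [a b] := maxi M1.1 M2; have [c d] := maxi M2.1 M1.
by split; apply/eqP; rewrite eqEsubset ?a ?b ?c ?d.
Qed.

Lemma tent_eq J t1 t2 : maximal_feasible J t1 -> maximal_feasible J t2 ->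
  tent_of t1 = tent_of t2.
Proof. by move=> M1 M2; rewrite /tent_of; case: (maxi_eq M1 M2) => -> ->. Qed.

Lemma tentI_iff J t m : maximal_feasible J t -> tentI J m <-> m \in tent_of t.
Proof.
move=> Mt; split; last by exists t.
by case=> t' [Mt' mt']; rewrite (tent_eq Mt Mt').
Qed.

Lemma propI_iff J t m : maximal_feasible J t -> propI J m <-> m \in prop_of t.
Proof.
move=> Mt; split; last by exists t.
by case=> t' [Mt' mt']; case: (maxi_eq Mt Mt') => ->.
Qed.

Lemma pendI_iff J t m : maximal_feasible J t -> pendI J m <-> m \in pend_of J t.
Proof.
move=> Mt; split; last by exists t.
by case=> t' [Mt' mt']; rewrite /pend_of (tent_eq Mt Mt').
Qed.

Lemma tent_not_ousted J t a b : maximal_feasible J t -> (a, b) \in tent_of t ->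
  ~~ ousted J (prop_of t) a b.
Proof.
move=> [Ft Mt]; rewrite in_setD => /andP[nr _]; apply/negP=> O.
by apply: (Mt (false, (a, b))); apply: feas_rej.
Qed.

Lemma feas_size J s : feasible J s -> size s <= #|{: event R H}|.
Proof. by move/feas_uniq/card_uniqP <-; apply: max_card. Qed.

Lemma exists_maximal J : exists t, maximal_feasible J t.
Proof.
suff: forall k s, feasible J s -> #|{: event R H}| - size s <= k -> exists t, maximal_feasible J t.
  by move/(_ _ [::] (feas_nil J) (leqnn _)).
elim=> [|k IH] s F le.
- exists s; split=> // e Fe; have := feas_size Fe; rewrite size_rcons.
  have := feas_size F; lia.
- case: (classic (exists e, feasible J (rcons s e))) => [[e Fe]|ne].
  + apply: (IH _ Fe); rewrite size_rcons; have := feas_size Fe; rewrite size_rcons; lia.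
  + by exists s; split=> // e Fe; apply: ne; exists e.
Qed.

End Gen2.


Section Gen3.
Variables (R H : finType).
Implicit Types (J : instance R H) (s : seq (event R H)).

Lemma feas_cat J s1 s2 : feasible J (s1 ++ s2) -> feasible J s1.
Proof.
elim/last_ind: s2 => [|s2 e IH]; first by rewrite cats0.
by rewrite -rcons_cat => /feas_inv[/IH].
Qed.

Lemma feas_take J s n : feasible J s -> feasible J (take n s).
Proof. by rewrite -{1}(cat_take_drop n s) => /feas_cat. Qed.

Lemma feas_transfer J1 J2 s : feasible J1 s ->
  (forall a b, (true, (a, b)) \in s -> b \in rlist J1 a ->
     b \in rlist J2 a /\ take (index b (rlist J2 a)) (rlist J2 a) = take (index b (rlist J1 a)) (rlist J1 a)) ->
  (forall a b M, (false, (a, b)) \in s -> ousted J1 M a b -> ousted J2 M a b) ->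
  feasible J2 s.
Proof.
elim=> [|s0 r h F IH nres np hin E|s0 r h F IH O nr] P Q.
- exact: feas_nil.
- have [h2 t2] : h \in rlist J2 r /\ take (index h (rlist J2 r)) (rlist J2 r) = take (index h (rlist J1 r)) (rlist J1 r).
    by apply: P => //; rewrite mem_rcons mem_head.
  apply: feas_prop => //.
  + by apply: IH => [a b m|a b M m]; [apply: P|apply: Q]; rewrite mem_rcons in_cons m orbT.
  + by rewrite t2.
- apply: feas_rej => //.
  + by apply: IH => [a b m|a b M m]; [apply: P|apply: Q]; rewrite mem_rcons in_cons m orbT.
  + by apply: Q => //; rewrite mem_rcons mem_head.
Qed.

Lemma ousted_ext (I J : instance R H) M a b : extension I J -> ousted I M a b -> ousted J M a b.
Proof.
case=> [q [_ ph]] /and3P[m c o]; have [t E] := prefixP (ph b).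
apply/and3P; split=> //; rewrite q.
- by rewrite /count_in E count_cat; apply: leq_trans c (leq_addr _ _).
- case: (boolP (a \in hlist I b)) => aI; last first.
  + case: (boolP (a \in hlist J b)) => //= aJ.
    rewrite /count_in E index_cat (negbTE aI) take_cat ltnNge leq_addr /= count_cat.
    move: c; rewrite /count_in; move=> c; exact: leq_trans c (leq_addr _ _).
  + have [i1 t1] := pre_index (ph b) aI.
    by move: o; rewrite aI /= /count_in t1 => ->; rewrite orbT.
Qed.

Lemma feas_ext (I J : instance R H) s : extension I J -> feasible I s -> feasible J s.
Proof.
move=> ex F; apply: (feas_transfer F).
- move=> a b _ bI; case: ex => [_ [pr _]].
  have [i1 t1] := pre_index (pr a) bI; split; last by [].
  by case/prefixP: (pr a) => t ->; rewrite mem_cat bI.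
- by move=> a b M _; apply: ousted_ext.
Qed.

End Gen3.


Section Compl.
Variables (R H : finType).
Implicit Types (J : instance R H) (s : seq (event R H)).

Lemma uniq_ext (T : eqType) (p : seq T) x (P : pred T) (l : seq T) :
  uniq p -> x \notin p -> uniq l -> (forall z, P z -> (z \notin p) && (z != x)) ->
  uniq (p ++ x :: filter P l).
Proof.
move=> up xp ul HP; rewrite cat_uniq up /= filter_uniq // andbT; apply/andP; split.
- rewrite negb_or xp /=; apply/hasPn => z; rewrite mem_filter => /andP[/HP/andP[]] //.
- apply/negP; rewrite mem_filter => /andP[/HP/andP[_]]; by rewrite eqxx.
Qed.

Lemma nhas_filter (T : finType) (l : seq T) : ~~ has (mem l) [seq z <- enum T | z \notin l].
Proof. by apply/hasPn => z; rewrite mem_filter => /andP[]. Qed.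

Definition stdc (I : instance R H) : instance R H :=
  Instance (quota I) (fun r => rlist I r ++ [seq z <- enum H | z \notin rlist I r])
    (fun h => hlist I h ++ [seq z <- enum R | z \notin hlist I h]).

Lemma stdc_completion I : valid_instance I -> completion I (stdc I).
Proof.
case=> q [ur uh]; split; [|split].
- split=> //; split=> x; rewrite cat_uniq ?ur ?uh filter_uniq ?enum_uniq ?andbT;
  by try (apply/andP; split=> //; apply: nhas_filter).
- by split; [|split] => x /=; rewrite ?prefix_prefix.
- split=> x z /=; rewrite mem_cat mem_filter mem_enum andbT; by case: (_ \in _).
Qed.

Definition modR J (a0 : R) (p : seq H) (y0 : H) : instance R H :=
  Instance (quota J)
    (fun a => if a == a0 then p ++ y0 :: [seq z <- enum H | (z \notin p) && (z != y0)] else rlist J a)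
    (hlist J).

Definition modH J (a0 : R) (p : seq R) (y0 : H) : instance R H :=
  Instance (quota J) (rlist J)
    (fun h => if (h == y0) && (a0 \notin p) then p ++ a0 :: [seq z <- hlist J y0 | (z \notin p) && (z != a0)]
              else hlist J h).

Lemma prefix_uniq (T : eqType) (p l : seq T) : prefix p l -> uniq l -> uniq p.
Proof. by case/prefixP=> t ->; rewrite cat_uniq => /andP[]. Qed.

Lemma mem_prefix (T : eqType) (p l : seq T) x : prefix p l -> x \in p -> x \in l.
Proof. by case/prefixP=> t -> xp; rewrite mem_cat xp. Qed.

Lemma modR_completion I J a0 y0 : completion I J -> y0 \notin rlist I a0 ->
  completion I (modR J a0 (rlist I a0) y0).
Proof.
case=> [[q [ur uh]] [[eq [pr ph]] [cr ch]]] ny; split; [|split].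
- split=> //; split=> // x /=; case: eqP => // _.
  apply: uniq_ext; [exact: prefix_uniq (pr a0) (ur a0)|done|exact: enum_uniq|by move=> z].
- split; [by move=> x; rewrite /= eq|split=> x /=; [case: eqP => [->|_]; [exact: prefix_prefix|exact: pr]|exact: ph]].
- split=> // x z /=; case: eqP => // _.
  rewrite mem_cat in_cons mem_filter mem_enum andbT.
  by case: (z \in rlist I a0); case: (z == y0).
Qed.

Lemma modH_completion I J a0 y0 : completion I J ->
  completion I (modH J a0 (hlist I y0) y0).
Proof.
case=> [[q [ur uh]] [[eq [pr ph]] [cr ch]]]; split; [|split].
- split=> //; split=> // x /=; case: ifP => // /andP[_ na].
  apply: uniq_ext; [exact: prefix_uniq (ph y0) (uh y0)|done|exact: uh|by move=> z].
- split; [by move=> x; rewrite /= eq|split=> x /=; [exact: pr|case: ifP => [/andP[/eqP -> _]|_]; [exact: prefix_prefix|exact: ph]]].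
- split=> // x z /=; case: ifP => // /andP[_ na].
  rewrite mem_cat in_cons mem_filter (ch y0) andbT.
  by case: (z \in hlist I y0); case: (z == a0).
Qed.

End Compl.


Lemma index_filter_lt (T : eqType) (P : pred T) s w1 w2 : P w1 -> P w2 -> w2 \in s ->
  index w1 s < index w2 s -> index w1 (filter P s) < index w2 (filter P s).
Proof.
move=> P1 P2; elim: s => [|c s IH] //= w2s.
case: (eqVneq c w1) => [E1|n1].
- by subst c; rewrite P1 /= ?eqxx; case: (w1 == w2).
- case: (eqVneq c w2) => [E2|n2]; first by subst c.
  move: w2s; rewrite in_cons eq_sym (negbTE n2) /= => w2s lt.
  case: (P c) => /=; rewrite ?(negbTE n1) ?(negbTE n2) ?ltnS; apply: IH => //.
Qed.

Section ModH.
Variables (R H : finType).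
Implicit Types (J : instance R H) (s : seq (event R H)).

Lemma count_in_le_uniq (M : {set match_t R H}) h (s1 s2 : seq R) :
  uniq s1 -> {subset s1 <= s2} -> count_in M h s1 <= count_in M h s2.
Proof.
move=> u sub; rewrite /count_in -!size_filter; apply: uniq_leq_size; first exact: filter_uniq.
by move=> z; rewrite !mem_filter => /andP[-> /sub].
Qed.

Lemma modH_prec I J a0 y0 z a : completion I J -> a0 \notin hlist I y0 -> a != a0 ->
  index z (hlist J y0) < index a (hlist J y0) ->
  index z (hlist (modH J a0 (hlist I y0) y0) y0) < index a (hlist (modH J a0 (hlist I y0) y0) y0).
Proof.
case=> [[q [ur uh]] [[eq [pr ph]] [cr ch]]] na ne.
have ne' : a0 != a by rewrite eq_sym.
rewrite /= eqxx na /=; set p := hlist I y0; set Q := fun z => _.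
have [t E] := prefixP (ph y0); rewrite -/p in E.
have fE : [seq z <- hlist J y0 | Q z] = [seq z <- t | Q z].
  rewrite E filter_cat (_ : [seq z <- p | Q z] = [::]) //.
  by rewrite -(filter_pred0 p); apply: eq_in_filter => w wp; rewrite /Q wp.
rewrite fE E !index_cat; case: (boolP (z \in p)) => zp; case: (boolP (a \in p)) => ap //.
- move=> _; have lt : index z p < size p by rewrite index_mem.
  rewrite /= ?(negbTE ne) ?(negbTE ne'); lia.
- have lt : index a p < size p by rewrite index_mem.
  move=> h; have := leq_ltn_trans (leq_addr _ _) h; by rewrite ltnNge (ltnW lt).
- rewrite /= ?(negbTE ne) ?(negbTE ne'); case: (eqVneq a0 z) => [E0|nz].
    by move=> _; rewrite ltn_add2l.
  have nz' : z != a0 by rewrite eq_sym.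
  rewrite ?(negbTE nz) ?(negbTE nz') addnS.
  rewrite ltn_add2l addnS ltnS ltn_add2l => lt; apply: index_filter_lt => //.
  + by rewrite /Q zp eq_sym nz.
  + by rewrite /Q ap ne.
  + have : a \in hlist J y0 by [].
    by rewrite E mem_cat (negbTE ap).
Qed.

Lemma modH_ousted I J a0 y0 M a : completion I J -> a != a0 ->
  ousted J M a y0 -> ousted (modH J a0 (hlist I y0) y0) M a y0.
Proof.
move=> C ne; case: (boolP (a0 \in hlist I y0)) => na.
- by rewrite /ousted /= eqxx na.
have C2 := modH_completion a0 y0 C.
case: C => [[q [ur uh]] [[eq [pr ph]] [cr ch]]].
case: C2 => [[q2 [ur2 uh2]] [[eq2 [pr2 ph2]] [cr2 ch2]]].
set J2 := modH _ _ _ _ in q2 ur2 uh2 eq2 pr2 ph2 cr2 ch2 *.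
case/and3P=> m c o; apply/and3P; split=> //.
- have pe : perm_eq (hlist J y0) (hlist J2 y0) by apply: uniq_perm => // z; rewrite ch ch2.
  by rewrite /count_in -(permP pe).
- apply/orP; right; move: o; rewrite ch /= => o.
  apply: leq_trans o _; apply: count_in_le_uniq; first exact: take_uniq.
  move=> z; rewrite in_take ?ch // in_take ?ch2 //; exact: modH_prec.
Qed.

End ModH.


Definition pb (P : Prop) : bool := if excluded_middle_informative P then true else false.
Lemma pbP (P : Prop) : pb P <-> P.
Proof. by rewrite /pb; case: excluded_middle_informative. Qed.

Section Main.
Variables (R H : finType) (I : instance R H).
Hypothesis vI : valid_instance I.
Hypothesis q1 : forall h, quota I h = 1.
Hypothesis rm : resident_minimal I.
Variable s0 : seq (event R H).
Hypothesis Ms0 : maximal_feasible I s0.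

Lemma rm0 a b : ((a, b) \in prop_of s0) = (b \in rlist I a).
Proof. by apply/idP/idP => [/(propI_iff _ Ms0)/rm //|/rm/(propI_iff _ Ms0)]. Qed.

Lemma count_pos (M : {set match_t R H}) h l z : z \in l -> (z, h) \in M -> 0 < count_in M h l.
Proof. by move=> zl zM; rewrite /count_in -has_count; apply/hasP; exists z => //; rewrite inE. Qed.

Lemma kill J x y r' sg : completion I J -> finalizable I (x, y) -> feasible J sg ->
  (r', y) \in prop_of sg -> index r' (hlist J y) < index x (hlist J y) -> False.
Proof.
move=> C [_ fin] Fs pr lt.
case: (fin J C) => t [Mt xt].
have [sp _] := maxi Fs Mt.
have := tent_not_ousted Mt xt; move/negP; apply.
case: C => [[q [ur uh]] [[eq [pr' ph]] [cr ch]]].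
apply/and3P; split.
- by move: xt; rewrite in_setD => /andP[].
- by rewrite eq q1; apply: (count_pos (ch y r')); apply: (subsetP sp).
- apply/orP; right; rewrite eq q1; apply: (count_pos (z := r')); last by apply: (subsetP sp).
  by rewrite in_take.
Qed.

Lemma kill2 x y r' : finalizable I (x, y) -> x != r' ->
  (x \in hlist I y -> (r' \in hlist I y) /\ index r' (hlist I y) < index x (hlist I y)) ->
  (exists J', completion I J' /\ exists sg, feasible (modH J' r' (hlist I y) y) sg /\ (r', y) \in prop_of sg) ->
  False.
Proof.
move=> fin nx Hx [J' [C [sg [Fs pr]]]].
apply: (kill (modH_completion r' y C) fin Fs pr).
have [t E] := prefixP (C.2.1.2.2 y).
case: (boolP (r' \in hlist I y)) => rp.
- rewrite /= eqxx rp /= E !index_cat rp.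
  case: (boolP (x \in hlist I y)) => xp; first by case: (Hx xp).
  have := index_mem r' (hlist I y); rewrite rp => lt; apply: leq_trans lt _; exact: leq_addr.
- have xp : x \notin hlist I y by apply/negP => xin; case: (Hx xin) => rin _; move: rp; rewrite rin.
  rewrite /= eqxx rp /= !index_cat (negbTE rp) (negbTE xp) /= eqxx.
  have nx' : r' != x by rewrite eq_sym.
  by rewrite (negbTE nx') ltn_add2l.
Qed.


Lemma get_sigma r' : (forall h', ~ finalizable I (r', h')) ->
  exists J0, completion I J0 /\ exists sg, feasible J0 sg /\
    (forall b, b \in rlist I r' -> (r', b) \in rej_of sg) /\
    (forall z, (r', z) \in prop_of sg -> z \in rlist I r').
Proof.
move=> nfin; case: (boolP (r' \in res (tent_of s0))).
- rewrite inE => /existsP[h' th'].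
  have tI : tentI I (r', h') by apply/(tentI_iff _ Ms0).
  have : ~ (forall J, completion I J -> tentI J (r', h')) by move=> all; apply: (nfin h').
  move=> NA; have [J0 HJ] := not_all_ex_not _ _ NA; have [C nt] := imply_to_and _ _ HJ.
  have [tau Mtau] := exists_maximal J0.
  have ext := C.2.1.
  have ps0 : (r', h') \in prop_of s0 by move: th'; rewrite in_setD => /andP[].
  have hI : h' \in rlist I r' by rewrite -rm0.
  have ptau : (r', h') \in prop_of tau by have [sp _] := maxi (feas_ext ext Ms0.1) Mtau; apply: (subsetP sp).
  have rtau : (r', h') \in rej_of tau.
    apply/negPn/negP => nr; apply: nt; apply/(tentI_iff _ Mtau); by rewrite in_setD nr.
  set e := (false, (r', h')).
  have etau : e \in tau by rewrite -in_rej.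
  have si : index e tau < size tau by rewrite index_mem.
  have Etake : take (index e tau).+1 tau = rcons (take (index e tau) tau) e.
    by rewrite (take_nth e si) nth_index.
  have Fs : feasible J0 (rcons (take (index e tau) tau) e) by rewrite -Etake; apply: feas_take; exact: Mtau.1.
  set sg0 := take (index e tau) tau in Etake Fs.
  have [Fs0 [O _]] := feas_inv Fs.
  have psg0 : (r', h') \in prop_of sg0 by case/and3P: O.
  have esg0 : e \notin sg0 by rewrite /sg0 in_take // ltnn.
  have [t Et] := prefixP (C.2.1.2.1 r').
  exists J0; split=> //; exists (rcons sg0 e); split=> //; split.
  + move=> b bI; rewrite rej_rcons; case: (eqVneq b h') => [->|nb]; first by rewrite eqxx.
    apply/orP; right.
    case: (index_lt_mem bI hI nb) => lt.
    * apply: (feas_prop_earlier Fs0 psg0); rewrite in_take; last by rewrite Et mem_cat bI.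
      have [i1 _] := pre_index (C.2.1.2.1 r') bI; have [i2 _] := pre_index (C.2.1.2.1 r') hI.
      by rewrite i1 i2.
    * have : (r', h') \in rej_of s0.
        by apply: (feas_prop_earlier Ms0.1 (_ : (r', b) \in prop_of s0)); rewrite ?rm0 // in_take.
      by move: th'; rewrite in_setD => /andP[/negP].
  + move=> z; rewrite prop_rcons /= => pz.
    apply/negPn/negP => nz.
    have zJ := feas_prop_list Fs0 pz.
    have : (r', h') \in rej_of sg0.
      apply: (feas_prop_earlier Fs0 pz); rewrite in_take; last by rewrite Et mem_cat hI.
      move: zJ; rewrite Et !index_cat hI (negbTE nz) mem_cat (negbTE nz) /= => _.
      apply: leq_trans (_ : size (rlist I r') <= _); [by rewrite index_mem|exact: leq_addr].
    by rewrite in_rej (negbTE esg0).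
- move=> nres; exists (stdc I); split; first exact: stdc_completion.
  exists s0; split; first exact: feas_ext (stdc_completion vI).2.1 Ms0.1.
  split.
  + move=> b bI; have : (r', b) \in prop_of s0 by rewrite rm0.
    apply: contraLR => nr; apply/negP => pb0; move: nres; rewrite inE => /existsP; apply.
    by exists b; rewrite in_setD nr.
  + move=> z /(feas_prop_list Ms0.1) //.
Qed.

Lemma ousted_modH_other (J : instance R H) a0 p y0 (M : {set match_t R H}) a b : b != y0 ->
  ousted (modH J a0 p y0) M a b = ousted J M a b.
Proof. by move=> nb; rewrite /ousted /= (negbTE nb). Qed.

Lemma construct r' y : (forall h', ~ finalizable I (r', h')) -> y \notin rlist I r' ->
  exists J', completion I J' /\ exists sg, feasible (modH J' r' (hlist I y) y) sg /\ (r', y) \in prop_of sg.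
Proof.
move=> nfin ny; have [J0 [C0 [sg0 [Fs0 [rejs props]]]]] := get_sigma nfin.
set J' := modR J0 r' (rlist I r') y.
have C' : completion I J' by apply: modR_completion.
exists J'; split=> //; exists (rcons sg0 (true, (r', y))); split; last by rewrite prop_rcons eqxx.
have npy : (r', y) \notin prop_of sg0 by apply/negP => /props; rewrite (negbTE ny).
apply: feas_prop.
- apply: (feas_transfer Fs0).
  + move=> a b ab bJ; rewrite /=; case: (eqVneq a r') => [ea|na]; last by [].
    subst a; have bI : b \in rlist I r' by apply: props; rewrite in_prop.
    split; first by rewrite mem_cat bI.
    have [_ t1] := pre_index (prefix_prefix (rlist I r') (y :: [seq z <- enum H | (z \notin rlist I r') && (z != y)])) bI.
    have [_ t2] := pre_index (C0.2.1.2.1 r') bI.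
    by rewrite t1 t2.
  + move=> a b M ab O; case: (eqVneq b y) => [eb|nb]; last by rewrite ousted_modH_other.
    subst b; apply: modH_ousted => //.
    apply/negP => /eqP ea; subst a; move: npy; rewrite (feas_rej_prop Fs0) //.
    by rewrite in_rej.
- apply/negP; rewrite inE => /existsP[z]; rewrite in_setD => /andP[nr pz].
  by move: nr; rewrite rejs ?props.
- exact: npy.
- by rewrite /= eqxx mem_cat mem_head orbT.
- move=> h'; rewrite /= eqxx index_cat (negbTE ny) /= eqxx addn0 take_size_cat //.
  exact: rejs.
Qed.


Definition Fset : {set match_t R H} := [set m | pb (finalizable I m)].

Lemma inF m : (m \in Fset) <-> finalizable I m.
Proof. by rewrite inE; apply: pbP. Qed.

Lemma rel_mono (A B : {set match_t R H}) y z : A \subset B ->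
  (forall m, m \in B -> m \in tent_of s0) -> relevant B y z -> relevant A y z.
Proof.
move=> sub BT; rewrite /relevant; case/orP => [zB|nzB].
- case: (boolP (z \in res A)) => zA; last by rewrite orbT.
  move: zA; rewrite inE => /existsP[h'' zA].
  have e := feas_tent_unique Ms0.1 (BT _ (subsetP sub _ zA)) (BT _ zB).
  by rewrite -e zA.
- apply/orP; right; apply: contra nzB; rewrite !inE => /existsP[h'' zA].
  by apply/existsP; exists h''; apply: (subsetP sub).
Qed.

Lemma end_mono (A B : {set match_t R H}) a b : A \subset B ->
  (forall m, m \in B -> m \in tent_of s0) -> (a, b) \in A ->
  endangered I B a b -> endangered I A a b.
Proof.
move=> sub BT aA [_ [[t [np c]]|[p c]]]; split=> //.
- left; split=> //; split=> //; apply: leq_trans c _; apply: sub_count => z.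
  exact: rel_mono.
- right; split=> //; apply: leq_trans c _; apply: subset_leq_card.
  by apply/subsetP => z; rewrite !inE; apply: rel_mono.
Qed.

Lemma kill_rel x y r' : finalizable I (x, y) -> x != r' -> (r', y) \notin prop_of s0 ->
  relevant Fset y r' ->
  (x \in hlist I y -> (r' \in hlist I y) /\ index r' (hlist I y) < index x (hlist I y)) -> False.
Proof.
move=> fin nx npr; rewrite /relevant; case/orP => [/inF [tI _]|nres] Hx.
- move/(tentI_iff _ Ms0): tI; rewrite in_setD => /andP[_ pr].
  by move: npr; rewrite pr.
- have nfin : forall h', ~ finalizable I (r', h').
    move=> h' fh; move: nres; rewrite inE => /existsP; apply; exists h'; exact/inF.
  apply: (kill2 fin nx Hx); apply: construct => //.
  by rewrite -rm0.
Qed.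

Lemma F_safe x y : finalizable I (x, y) -> ~ endangered I Fset x y.
Proof.
move=> fin [_ E].
have xt : (x, y) \in tent_of s0 by apply/(tentI_iff _ Ms0); exact: fin.1.
have xp : (x, y) \in prop_of s0 by move: xt; rewrite in_setD => /andP[].
case: E => [[tI [npI cnt]]|[pI card]].
- have xl : x \in hlist I y.
    apply/negPn/negP => nxl; apply: npI; apply/(pendI_iff _ Ms0); rewrite inE xt /=; exact: nxl.
  rewrite q1 -has_count in cnt; case/hasP: cnt => r' r'in rel.
  have r'l : r' \in hlist I y := mem_take r'in.
  have lt : index r' (hlist I y) < index x (hlist I y) by rewrite -in_take.
  have nx : x != r' by apply/eqP => e; subst; rewrite ltnn in lt.
  have npr : (r', y) \notin prop_of s0.
    apply/negP => pr; have := tent_not_ousted Ms0 xt; move/negP; apply.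
    apply/and3P; split=> //; rewrite q1; first exact: count_pos r'l _.
    by apply/orP; right; apply: (count_pos r'in).
  by apply: (kill_rel fin nx npr rel).
- have nxl : x \notin hlist I y.
    by move/(pendI_iff _ Ms0): pI; rewrite inE => /andP[].
  case: (pickP (fun z => relevant Fset y z && (z != x))) => [r' /andP[rel nx']|none].
  + have nx : x != r' by rewrite eq_sym.
    case: (boolP ((r', y) \in prop_of s0)) => pr; last first.
      by apply: (kill_rel fin nx pr rel); rewrite (negbTE nxl).
    have r'l : r' \notin hlist I y.
      apply/negP => r'l; have := tent_not_ousted Ms0 xt; move/negP; apply.
      apply/and3P; split=> //; rewrite q1; first exact: count_pos r'l _.
      by rewrite nxl.
    apply: (kill2 fin nx); first by rewrite (negbTE nxl).
    exists (stdc I); split; first exact: stdc_completion.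
    exists s0; split=> //.
    apply: feas_ext _ Ms0.1; exact: (modH_completion r' y (stdc_completion vI)).2.1.
  + move: card; rewrite q1; apply/negP; rewrite -ltnNge ltnS.
    apply: leq_trans (_ : #|[set x]| <= 1); last by rewrite cards1.
    apply: subset_leq_card; apply/subsetP => z; rewrite !inE => rz.
    by apply/negPn/negP => nz; move: (none z); rewrite /= rz nz.
Qed.

Lemma main_in r h : finalizable I (r, h) -> forall M, maximal_safe I M -> (r, h) \in M.
Proof.
move=> fin M [[subM nE] maxM].
set M' := M :|: Fset.
have MT : forall m, m \in M' -> m \in tent_of s0.
  move=> m; rewrite in_setU => /orP[/subM t|/inF [t _]]; exact/(tentI_iff _ Ms0).
have sM' : safe I M'.
  split; first by move=> m /MT /(tentI_iff _ Ms0).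
  move=> a b E; have := E.1; rewrite in_setU => /orP[aM|aF].
  - by apply: (nE a b); apply: (end_mono (subsetUl M Fset)).
  - by apply: (F_safe (proj1 (inF _) aF)); apply: (end_mono (subsetUr M Fset)).
have e := maxM M' (subsetUl _ _) sM'.
by rewrite -e in_setU; apply/orP; right; apply/inF.
Qed.

End Main.


Theorem theorem7 (R H : finType) (I : instance R H) :
  valid_instance I ->
  (forall h, quota I h = 1) ->
  resident_minimal I ->
  forall (r : R) (h : H),
    tentI I (r, h) ->
    finalizable I (r, h) ->
    forall M : {set match_t R H}, maximal_safe I M -> (r, h) \in M.
Proof.
move=> vI q1 rm r h [s0 [Ms0 _]] fin M mM.
exact: (main_in vI q1 rm Ms0 fin mM).
Qed.
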